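(* Let $\delta\ge 2$ and $s\in\{1,\dots,n\}$ with $r:=d_s-\delta+1\ge 1$, let $\tilde d=\sum_{i\ne s}(d_i-1)+d_s-\delta$, and let $d$ be an integer with $1\le d\le\tilde d$. If $d<r$ then $\dim_{\mathbb F_q}\mathcal D^{(\delta,s)}_{\mathcal X}(d)=\dim_{\mathbb F_q}\mathcal C_{\mathcal X}(d)$. If $r\le d\le\tilde d$ then $$\dim_{\mathbb F_q}\mathcal D^{(\delta,s)}_{\mathcal X}(d)=\dim_{\mathbb F_q}\mathcal C_{\mathcal X}(d)-\sum_{i=0}^{\delta-2}\dim_{\mathbb F_q}\mathcal C_{\mathcal X_s}(d-r-i),$$ where $\dim_{\mathbb F_q}\mathcal C_{\mathcal X_s}(e)$ is taken to be $0$ when $e<0$.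
   Context: Let $\mathbb F_q$ be a finite field, $K_1,\dots,K_n\subseteq\mathbb F_q$ nonempty, $d_i=|K_i|$, and $\mathcal X=K_1\times\cdots\times K_n=\{\boldsymbol\alpha_1,\dots,\boldsymbol\alpha_m\}$ (a fixed enumeration), $m=\prod_{i=1}^n d_i$. Let $\Psi:\mathbb F_q[X_1,\dots,X_n]\to\mathbb F_q^m$, $f\mapsto(f(\boldsymbol\alpha_1),\dots,f(\boldsymbol\alpha_m))$. For $d\ge 0$, $\mathbb F_q[X_1,\dots,X_n]_{\le d}$ is the space of polynomials of degree at most $d$ together with $0$. The affine cartesian code is $\mathcal C_{\mathcal X}(d)=\Psi(\mathbb F_q[X_1,\dots,X_n]_{\le d})$. For integers $\delta\ge 2$ and $s\in\{1,\dots,n\}$, $\mathcal P^{(\delta,s)}_d$ is the set of $f\in\mathbb F_q[X_1,\dots,X_n]_{\le d}$ with $\deg_{X_s}f<d_s-\delta+1$, together with $0$; the $(\delta,s)$-quasi affine cartesian code is $\mathcal D^{(\delta,s)}_{\mathcal X}(d)=\Psi(\mathcal P^{(\delta,s)}_d)$. Also $\mathcal X_s=K_1\times\cdots\times K_{s-1}\times K_{s+1}\times\cdots\times K_n\subseteq\mathbb F_q^{n-1}$, and $\mathcal C_{\mathcal X_s}(e)$ is the affine cartesian code of order $e$ defined in the same way over the sets $K_1,\dots,K_{s-1},K_{s+1},\dots,K_n$ (image of polynomials of degree $\le e$ in $n-1$ variables evaluated at the points of $\mathcal X_s$). *)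

(* Defs.v *)
From HB Require Import structures.
From mathcomp Require Import all_boot all_order all_algebra all_field.
From mathcomp Require Import mpoly.
From mathcomp Require Import boolp.

Set Implicit Arguments.
Unset Strict Implicit.
Unset Printing Implicit Defensive.

Import GRing.Theory.
Local Open Scope ring_scope.

Section Codes.
Variables (F : finFieldType) (k : nat) (K : 'I_k -> {set F}).

Definition cart_set : {set {ffun 'I_k -> F}} :=
  [set x : {ffun 'I_k -> F} | [forall i, x i \in K i]].

Definition cart_pt (j : 'I_#|cart_set|) : {ffun 'I_k -> F} := enum_val j.

Definition Psi (f : {mpoly F[k]}) : 'rV[F]_#|cart_set| :=
  \row_(j < #|cart_set|) f.@[cart_pt j].

Definition Psi_image (P : {mpoly F[k]} -> Prop) : {set 'rV[F]_#|cart_set|} :=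
  [set v | `[< exists f, P f /\ Psi f = v >]].

(* Dimension over F of a (linear) code, as the dimension of its F-span
   (the code is a subspace, so its span is itself). *)
Definition code_dim (C : {set 'rV[F]_#|cart_set|}) : nat :=
  \dim <<enum C>>%VS.

(* degree of f in the variable X_s (0 for f = 0) *)
Definition degX (s : 'I_k) (f : {mpoly F[k]}) : nat :=
  (\max_(m <- msupp f) m s)%N.

(* Affine cartesian code C_X(d): image of polynomials of total degree <= d
   (msize f = 1 + total degree, 0 for f = 0). *)
Definition cart_code (d : nat) : {set 'rV[F]_#|cart_set|} :=
  Psi_image (fun f => (msize f <= d.+1)%N).

Definition quasi_cart_code (delta : nat) (s : 'I_k) (d : nat)
  : {set 'rV[F]_#|cart_set|} :=
  Psi_image (fun f => (msize f <= d.+1)%N /\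
                      (degX s f < #|K s| - delta + 1)%N).

End Codes.

Definition dimC (F : finFieldType) (k : nat) (K : 'I_k -> {set F}) (d : nat) :=
  code_dim (cart_code K d).

Definition dimD (F : finFieldType) (k : nat) (K : 'I_k -> {set F})
  (delta : nat) (s : 'I_k) (d : nat) :=
  code_dim (quasi_cart_code K delta s d).

(* the family K_1,..,K_{s-1},K_{s+1},..,K_{n} (n = k.+1), defining X_s *)
Definition drop_set (F : finFieldType) (k : nat) (K : 'I_k.+1 -> {set F})
  (s : 'I_k.+1) : 'I_k -> {set F} := fun j => K (lift s j).

(* Main.v *)
Require Import Defs.
From HB Require Import structures.
From mathcomp Require Import all_boot all_order all_algebra all_field.
From mathcomp Require Import mpoly boolp.
From mathcomp Require Import zify ring.

Set Implicit Arguments.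
Unset Strict Implicit.
Unset Printing Implicit Defensive.
Import GRing.Theory.
Local Open Scope ring_scope.

Section Gen.
Variables (F : finFieldType) (n : nat) (K : 'I_n -> {set F}).

Local Notation N := #|cart_set K|.
Local Notation D := #|{: F}|.

Definition evn (m : 'I_n -> nat) : 'rV[F]_N :=
  \row_j \prod_i (@cart_pt F n K j i) ^+ (m i).

Lemma evn_ext m m' : (forall i, m i = m' i) -> evn m = evn m'.
Proof. by move=> E; apply/rowP=> j; rewrite !mxE; apply: eq_bigr => i _; rewrite E. Qed.

Definition boxp (t : {ffun 'I_n -> 'I_D}) : bool := [forall i, (t i < #|K i|)%N].
Definition tn (t : {ffun 'I_n -> 'I_D}) : 'I_n -> nat := fun i => nat_of_ord (t i).
Definition boxs := enum [pred t | boxp t].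
Definition Xfull := map (fun t => evn (tn t)) boxs.

Lemma cardK_le i : (#|K i| <= D)%N.
Proof. exact: max_card. Qed.

Lemma cart_ptP j i : @cart_pt F n K j i \in K i.
Proof.
have := enum_valP j; rewrite /cart_pt /cart_set inE => /forallP; exact.
Qed.

Definition pXs (s : seq F) : {poly F} := \prod_(b <- s) ('X - b%:P).
Lemma pXsE (s : seq F) x : (pXs s).[x] = \prod_(b <- s) (x - b).
Proof. rewrite /pXs horner_prod. by under eq_bigr do rewrite hornerXsubC. Qed.
Lemma size_pXs (s : seq F) : size (pXs s) = (size s).+1.
Proof. exact: size_prod_XsubC. Qed.
Lemma monic_pXs (s : seq F) : pXs s \is monic.
Proof. exact: monic_prod_XsubC. Qed.

Definition lag i (a : F) : {poly F} :=
  (\prod_(b <- enum (K i :\ a)) (a - b))^-1 *: pXs (enum (K i :\ a)).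

Lemma size_lag i a : a \in K i -> (size (lag i a) <= #|K i|)%N.
Proof.
move=> aK; apply: leq_trans (size_scale_leq _ _) _.
by rewrite size_pXs -cardE (cardsD1 a (K i)) aK.
Qed.

Lemma lagE i a x : a \in K i -> x \in K i -> (lag i a).[x] = (x == a)%:R.
Proof.
move=> aK xK; rewrite /lag hornerZ pXsE.
have nz : \prod_(b <- enum (K i :\ a)) (a - b) != 0.
  rewrite prodf_seq_neq0; apply/allP=> b; rewrite mem_enum !inE => /andP [ba _].
  by rewrite subr_eq0 eq_sym.
case: eqP => [->|xa]; first by rewrite mulVf.
apply/eqP; rewrite mulf_eq0; apply/orP; right.
rewrite prodf_seq_eq0; apply/hasP.
exists x; first by rewrite mem_enum !inE xK andbT; apply/eqP.
by rewrite /= subrr eqxx.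
Qed.

Lemma card_ltD c : (c <= D)%N -> #|[pred l : 'I_D | (l < c)%N]| = c.
Proof.
move=> cD; rewrite -sum1_card big_mkcond /=.
rewrite -(big_mkord xpredT (fun l => if (l < c)%N then 1%N else 0%N)).
rewrite (big_cat_nat (leq0n c) cD) /=.
rewrite (@eq_big_nat _ 0%N addn 0%N c _ (fun _ => 1%N)); last by move=> l /andP [_ ->].
rewrite (@eq_big_nat _ 0%N addn c D _ (fun _ => 0%N)); last first.
  by move=> l /andP [cl _]; rewrite ltnNge cl.
by rewrite !sum_nat_const_nat muln0 muln1 addn0 subn0.
Qed.

Lemma card_box : #|[pred t | boxp t]| = N.
Proof.
have -> : #|[pred t | boxp t]| = #|family (fun i => [pred l : 'I_D | (l < #|K i|)%N])|.
  by apply: eq_card => t; rewrite !inE.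
have -> : N = #|family (fun i => mem (K i))|.
  by apply: eq_card => t; rewrite /cart_set !inE.
rewrite !card_family; congr foldr; apply: eq_map => i.
by rewrite card_ltD ?cardK_le.
Qed.

Lemma delta_span j : delta_mx 0 j \in <<Xfull>>%VS.
Proof.
set a := @cart_pt F n K j.
pose c (t : {ffun 'I_n -> 'I_D}) := \prod_i (lag i (a i))`_(t i).
have E : delta_mx 0 j = \sum_t c t *: evn (tn t).
  apply/rowP => j'; rewrite !mxE summxE.
  under eq_bigr => t _ do rewrite !mxE.
  rewrite /c.
  under eq_bigr => t _ do rewrite -big_split /=.
  rewrite -(bigA_distr_bigA (fun i (l : 'I_D) => (lag i (a i))`_l * (@cart_pt F n K j' i) ^+ l)).
  rewrite (eq_bigr (fun i => (lag i (a i)).[@cart_pt F n K j' i])); last first.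
    move=> i _; rewrite (horner_coef_wide _ (leq_trans (size_lag (cart_ptP j i)) (cardK_le i))).
    by [].
  rewrite (eq_bigr (fun i => ((@cart_pt F n K j' i) == a i)%:R)); last first.
    by move=> i _; rewrite lagE // cart_ptP.
  rewrite eqxx /=; case: eqP => [->|neq].
    by rewrite big1 // => i _; rewrite eqxx.
  have [i ni] : exists i, @cart_pt F n K j' i != a i.
    apply/existsP; rewrite -negb_forall; apply/negP => /forallP H; apply: neq.
    by apply: enum_val_inj; apply/ffunP => i; apply/eqP; exact: H.
  by rewrite (bigD1 i) //= (negbTE ni) mul0r.
rewrite E; apply: memv_suml => t _.
case: (boolP (boxp t)) => bt.
  by apply: memvZ; apply: memv_span; apply: map_f; rewrite mem_enum.
have -> : c t = 0.
  move: bt; rewrite negb_forall => /existsP [i]; rewrite -leqNgt => hi.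
  apply/eqP/prodf_eq0; exists i => //=.
  by rewrite nth_default //; exact: leq_trans (size_lag (cart_ptP j i)) hi.
by rewrite scale0r mem0v.
Qed.

Lemma Xfull_span : <<Xfull>>%VS = fullv.
Proof.
apply/vspaceP => w; rewrite memvf; apply/idP.
rewrite (matrix_sum_delta w) big_ord1; apply: memv_suml => j _.
apply: memvZ; exact: delta_span.
Qed.

Lemma free_Xfull : free Xfull.
Proof.
rewrite /free Xfull_span dimvf dim_matrix size_map /boxs -cardE card_box mul1r.
done.
Qed.


Definition XP (P : pred ('I_n -> nat)) :=
  map (fun t => evn (tn t)) (filter (fun t => P (tn t)) boxs).
Definition downc (P : pred ('I_n -> nat)) :=
  forall m m', (forall i, (m' i <= m i)%N) -> P m -> P m'.

Lemma free_XP P : free (XP P).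
Proof.
have := free_Xfull; rewrite /Xfull.
have pe : perm_eq (filter (fun t => P (tn t)) boxs ++ filter (predC (fun t => P (tn t))) boxs) boxs.
  by rewrite perm_filterC.
rewrite -(perm_free (perm_map (fun t => evn (tn t)) pe)) map_cat.
exact: catl_free.
Qed.

Lemma reduce P (dP : downc P) b m : (\sum_i m i < b)%N -> P m -> evn m \in <<XP P>>%VS.
Proof.
elim: b m => [//|b IH] m Hs Pm.
case: (boolP [forall i, (m i < #|K i|)%N]) => [/forallP hb | ].
  have ltD : forall i, (m i < D)%N := fun i => leq_trans (hb i) (cardK_le i).
  pose t := [ffun i => Ordinal (ltD i)].
  have tm : forall i, tn t i = m i by move=> i; rewrite /tn ffunE.
  rewrite (@evn_ext m (tn t)); last by move=> i; rewrite tm.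
  apply: memv_span; apply: map_f; rewrite mem_filter mem_enum inE /boxp.
  apply/andP; split; first by apply: dP Pm => i; rewrite tm.
  by apply/forallP => i; rewrite ffunE /=.
rewrite negb_forall => /existsP [i]; rewrite -leqNgt => ci.
set c := #|K i|; set g := pXs (enum (K i)).
pose m' (l : nat) := fun i' => if i' == i then (m i - c + l)%N else m i'.
have E : evn m = - \sum_(l < c) g`_l *: evn (m' l).
  apply/rowP => j; rewrite !mxE summxE.
  set x := @cart_pt F n K j.
  have sg : size g = c.+1 by rewrite size_pXs -cardE.
  have hg0 : g.[x i] = 0.
    rewrite pXsE; apply/eqP; rewrite prodf_seq_eq0; apply/hasP.
    by exists (x i); [rewrite mem_enum cart_ptP | rewrite /= subrr eqxx].
  have hg : \sum_(l < c) g`_l * x i ^+ l = - x i ^+ c.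
    move: hg0; rewrite (horner_coef_wide _ (eq_leq sg)) big_ord_recr /=.
    have -> : g`_c = 1.
      by have := monicP (monic_pXs (enum (K i))); rewrite /lead_coef size_pXs -cardE.
    by rewrite mul1r => /eqP; rewrite addr_eq0 => /eqP.
  set R := \prod_(i' | i' != i) x i' ^+ m i'.
  rewrite (bigD1 i) //= -/R.
  rewrite (eq_bigr (fun l : 'I_c => g`_l * x i ^+ l * (x i ^+ (m i - c) * R))); last first.
    move=> l _; rewrite !mxE (bigD1 i) //= /m' eqxx.
    rewrite (eq_bigr (fun i' => x i' ^+ m i')); last by move=> i' /negbTE ->.
    by rewrite -/R exprD; ring.
  rewrite -mulr_suml hg mulNr opprK mulrA -exprD subnKC //.
rewrite E memvN; apply: memv_suml => l _; apply: memvZ; apply: IH.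
  have lc := ltn_ord l.
  rewrite -ltnS; apply: leq_trans Hs; rewrite ltnS.
  rewrite (bigD1 i) //= [in X in (_ < X)%N](bigD1 i) //= /m' eqxx.
  rewrite (eq_bigr (fun i' => m i')); last by move=> i' /negbTE ->.
  rewrite ltn_add2r; lia.
apply: dP Pm => i'; rewrite /m'; case: eqP => [->|//].
have lc := ltn_ord l; lia.
Qed.

Lemma PsiE (f : {mpoly F[n]}) :
  Psi K f = \sum_(m <- msupp f) f@_m *: evn (fun i => m i).
Proof.
apply/rowP => j; rewrite !mxE mevalE summxE; apply: eq_bigr => m _; rewrite !mxE //.
Qed.

Lemma PsiX (m : 'X_{1..n}) : Psi K 'X_[m] = evn (fun i => m i).
Proof. by apply/rowP => j; rewrite !mxE mevalX. Qed.

Lemma dim_image (Pp : {mpoly F[n]} -> Prop) (P : pred ('I_n -> nat)) :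
  downc P ->
  (forall f, Pp f -> forall m, m \in msupp f -> P (fun i => m i)) ->
  (forall m : 'X_{1..n}, P (fun i => m i) -> Pp 'X_[m]) ->
  code_dim (Psi_image K Pp) = count (fun t => P (tn t)) boxs.
Proof.
move=> dP HA HB; rewrite /code_dim.
have -> : <<enum (Psi_image K Pp)>>%VS = <<XP P>>%VS.
  apply/eqP; rewrite eqEsubv; apply/andP; split.
    apply/span_subvP => v; rewrite mem_enum inE => /asboolP [f [Pf <-]].
    rewrite PsiE big_seq; apply: memv_suml => m mf; apply: memvZ.
    apply: (reduce dP (ltnSn _)); exact: HA _ Pf m mf.
  apply/span_subvP => v /mapP [t]; rewrite mem_filter => /andP [Pt _] ->.
  apply: memv_span; rewrite mem_enum inE; apply/asboolP.
  exists 'X_[[multinom tn t i | i < n]]; split.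
    by apply: HB; apply: dP Pt => i; rewrite mnmE.
  by rewrite PsiX; apply: evn_ext => i; rewrite mnmE.
have /eqP -> := free_XP P.
by rewrite size_map size_filter.
Qed.

End Gen.

Definition cnt (F : finFieldType) (n : nat) (K : 'I_n -> {set F}) (P : pred ('I_n -> nat)) : nat :=
  (\sum_(t : {ffun 'I_n -> 'I_#|{: F}|}) (boxp K t && P (tn t)))%N.

Lemma count_sum (T : Type) (a : pred T) (s : seq T) : count a s = (\sum_(x <- s) a x)%N.
Proof. elim: s => [|x s IH]; first by rewrite big_nil. by rewrite big_cons /= IH. Qed.

Lemma countE (F : finFieldType) (n : nat) (K : 'I_n -> {set F}) (P : pred ('I_n -> nat)) :
  count (fun t => P (tn t)) (boxs K) = cnt K P.
Proof.
rewrite count_sum /boxs big_enum /= big_mkcond /cnt; apply: eq_bigr => t _.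
by rewrite inE; case: (boxp K t).
Qed.

Lemma dimC_cnt (F : finFieldType) (n : nat) (K : 'I_n -> {set F}) d :
  dimC K d = cnt K (fun m => (\sum_i m i)%N <= d)%N.
Proof.
rewrite /dimC /cart_code -countE; apply: (@dim_image F n K _ (fun m => (\sum_i m i)%N <= d)%N).
- by move=> m m' le H; apply: leq_trans H; apply: leq_sum => i _.
- move=> f Hf m mf; rewrite -mdegE -ltnS; exact: leq_trans (msize_mdeg_lt mf) Hf.
- by move=> m H; rewrite msizeX ltnS mdegE.
Qed.

Lemma dimD_cnt (F : finFieldType) (n : nat) (K : 'I_n -> {set F}) delta s d :
  dimD K delta s d =
  cnt K (fun m => ((\sum_i m i)%N <= d)%N && (m s < #|K s| - delta + 1)%N).
Proof.
rewrite /dimD /quasi_cart_code -countE.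
apply: (@dim_image F n K _ (fun m => ((\sum_i m i)%N <= d)%N && (m s < #|K s| - delta + 1)%N)).
- move=> m m' le /andP [H1 H2]; apply/andP; split.
    by apply: leq_trans H1; apply: leq_sum => i _.
  exact: leq_ltn_trans (le s) H2.
- move=> f [Hf Hs] m mf; apply/andP; split.
    rewrite -mdegE -ltnS; exact: leq_trans (msize_mdeg_lt mf) Hf.
  apply: leq_ltn_trans Hs; rewrite /degX.
  by apply: (@leq_bigmax_seq _ _ xpredT (fun m0 : 'X_{1..n} => m0 s) m mf).
- move=> m /andP [H1 H2]; split; first by rewrite msizeX ltnS mdegE.
  by rewrite /degX msuppX big_seq1.
Qed.

Section Comb.
Variables (F : finFieldType) (k : nat) (K : 'I_k.+1 -> {set F}) (s : 'I_k.+1).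
Local Notation D := #|{: F}|.
Local Notation K' := (drop_set K s).

Definition ins (a : 'I_D) (u : {ffun 'I_k -> 'I_D}) : {ffun 'I_k.+1 -> 'I_D} :=
  [ffun i => if unlift s i is Some i' then u i' else a].
Definition prj (t : {ffun 'I_k.+1 -> 'I_D}) : 'I_D * {ffun 'I_k -> 'I_D} :=
  (t s, [ffun i' => t (lift s i')]).

Lemma insS a u : ins a u s = a.
Proof. by rewrite ffunE unlift_none. Qed.
Lemma insL a u i : ins a u (lift s i) = u i.
Proof. by rewrite ffunE liftK. Qed.

Lemma sum_ins (G : {ffun 'I_k.+1 -> 'I_D} -> nat) :
  (\sum_t G t = \sum_(a : 'I_D) \sum_(u : {ffun 'I_k -> 'I_D}) G (ins a u))%N.
Proof.
rewrite pair_big /=.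
apply: (reindex (fun p : 'I_D * {ffun 'I_k -> 'I_D} => ins p.1 p.2)).
apply: onW_bij; exists prj.
  by move=> [a u]; rewrite /prj insS; congr pair; apply/ffunP => i; rewrite ffunE insL.
move=> t; apply/ffunP => i; rewrite ffunE; case: unliftP => [j ->|->] //.
by rewrite ffunE.
Qed.

Lemma sum_tn_ins a u : (\sum_i tn (ins a u) i = a + \sum_i tn u i)%N.
Proof.
rewrite (bigD1_ord s) //= /tn insS; congr addn; apply: eq_bigr => i _.
by rewrite insL.
Qed.

Lemma boxp_ins a u : boxp K (ins a u) = (a < #|K s|)%N && boxp K' u.
Proof.
rewrite /boxp; apply/forallP/andP => [H|[H1 /forallP H2] i].
  split; first by have := H s; rewrite insS.
  by apply/forallP => i; have := H (lift s i); rewrite insL.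
case: (unliftP s i) => [j ->|->]; first by rewrite insL; exact: H2.
by rewrite insS.
Qed.

Lemma sum_shift (H : nat -> nat) r L :
  (\sum_(r <= a < r + L) H a = \sum_(i < L) H (r + i))%N.
Proof.
elim: L => [|L IH]; first by rewrite addn0 big_geq // big_ord0.
by rewrite addnS big_nat_recr /= ?leq_addr // IH big_ord_recr.
Qed.

End Comb.

Lemma key (F : finFieldType) (k : nat) (K : 'I_k.+1 -> {set F}) (delta : nat) (s : 'I_k.+1) (d : nat) :
  (2 <= delta)%N -> (delta <= #|K s|)%N ->
  cnt K (fun m => ((\sum_i m i)%N <= d)%N) =
  (cnt K (fun m => ((\sum_i m i)%N <= d)%N && (m s < #|K s| - delta + 1)%N)
   + \sum_(i < delta.-1)
       (if (#|K s| - delta + 1 + i <= d)%N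
        then cnt (drop_set K s) (fun m => ((\sum_i m i)%N <= d - (#|K s| - delta + 1) - i)%N)
        else 0%N))%N.
Proof.
move=> hd2 hds.
set r := (#|K s| - delta + 1)%N.
set D := #|{: F}|.
rewrite /cnt.
rewrite (eq_bigr (fun t => (boxp K t && (((\sum_i tn t i)%N <= d)%N && (tn t s < r)%N))
   + (boxp K t && ((\sum_i tn t i)%N <= d)%N && ~~ (tn t s < r)%N))%N); last first.
  by move=> t _; case: (boxp K t) => //=; case: ((\sum_i tn t i)%N <= d)%N => //=; case: (tn t s < r)%N.
rewrite big_split /=; congr addn.
rewrite (sum_ins s).
pose H (a : nat) := if ((r <= a < #|K s|) && (a <= d))%N
   then (\sum_(u : {ffun 'I_k -> 'I_D}) (boxp (drop_set K s) u && ((\sum_i tn u i)%N <= d - a)%N))%N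
   else 0%N.
rewrite (eq_bigr (fun a : 'I_D => H a)); last first.
  move=> a _.
  rewrite (eq_bigr (fun u => nat_of_bool (((r <= a < #|K s|) && (a <= d))%N &&
       (boxp (drop_set K s) u && ((\sum_i tn u i)%N <= d - a)%N)))); last first.
    move=> u _; rewrite boxp_ins sum_tn_ins.
    have -> : tn (ins s a u) s = a by rewrite /tn insS.
    rewrite -leqNgt.
    case: (leqP a d) => ad.
      rewrite (leq_subRL _ ad) andbT.
      by case: (r <= a)%N (a < #|K s|)%N (boxp (drop_set K s) u) (a + \sum_i tn u i <= d)%N => [] [] [] [].
    have -> : (a + (\sum_i tn u i)%N <= d)%N = false.
      by apply/negbTE; rewrite -ltnNge; apply: ltn_addr.
    by rewrite !andbF andFb.
  rewrite /H; case: ifP => C; first by [].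
  by rewrite big1.
rewrite -(big_mkord xpredT H).
have rD : (r <= #|K s|)%N by rewrite /r; lia.
have sD : (#|K s| <= D)%N by exact: max_card.
rewrite (big_cat_nat (leq0n r) (leq_trans rD sD)) /=.
rewrite (big_cat_nat rD sD) /=.
have Z1 : (\sum_(0 <= a < r) H a = 0)%N.
  rewrite big_nat_cond big1 // => a /andP [/andP [_ ar] _].
  by rewrite /H leqNgt ar.
have Z2 : (\sum_(#|K s| <= a < D) H a = 0)%N.
  rewrite big_nat_cond big1 // => a /andP [/andP [sa _] _].
  by rewrite /H ltnNge sa /= andbF.
rewrite Z1 Z2 add0n addn0.
have eds : #|K s| = (r + delta.-1)%N by rewrite /r; lia.
rewrite [X in \sum_(r <= i < X) _]eds sum_shift; apply: eq_bigr => i _.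
have iL := ltn_ord i.
rewrite /H leq_addr /=.
have -> : (r + i < #|K s|)%N by rewrite eds ltn_add2l.
by rewrite /= subnDA.
Qed.

Unset Implicit Arguments.
Local Close Scope ring_scope.

(* n variables is written here as k.+1 (n >= 1 since s in {1..n}). *)
Theorem mainTheorem4 (F : finFieldType) (k : nat) (K : 'I_k.+1 -> {set F})
  (delta : nat) (s : 'I_k.+1) (d : nat) :
  (forall i, K i != set0) ->
  (2 <= delta)%N ->
  (1 <= #|K s| - delta + 1)%N ->
  (delta <= #|K s|)%N ->
  let r := (#|K s| - delta + 1)%N in
  let dtilde := ((\sum_(i < k.+1 | i != s) (#|K i| - 1)) + (#|K s| - delta))%N in
  (1 <= d)%N -> (d <= dtilde)%N ->
  ((d < r)%N -> dimD K delta s d = dimC K d) /\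
  ((r <= d)%N ->
     (dimD K delta s d)%:Z =
       (dimC K d)%:Z
       - (\sum_(i < delta.-1)
            (if (r + i <= d)%N then dimC (drop_set K s) (d - r - i) else 0%N))%:Z)%R.
Proof.
move=> _ hd2 _ hds r dt _ _; split.
  move=> dr; rewrite dimD_cnt dimC_cnt /cnt; apply: eq_bigr => t _.
  case: (boxp K t) => //=.
  have tle : (tn t s <= (\sum_i tn t i))%N by rewrite (bigD1 s) //= leq_addr.
  case E: (\sum_i tn t i <= d)%N => //=.
  rewrite /r in dr; have -> : (tn t s < #|K s| - delta + 1)%N by apply: (leq_ltn_trans tle); exact: (leq_ltn_trans E dr).
  done.
move=> rd; rewrite dimD_cnt dimC_cnt (key d hd2 hds).
have -> : (\sum_(i < delta.-1) (if (r + i <= d)%N then dimC (drop_set K s) (d - r - i) else 0%N))%N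
  = (\sum_(i < delta.-1) (if (#|K s| - delta + 1 + i <= d)%N then
      cnt (drop_set K s) (fun m => ((\sum_i0 m i0)%N <= d - (#|K s| - delta + 1) - i)%N) else 0%N))%N.
  by apply: eq_bigr => i _; rewrite dimC_cnt.
by rewrite PoszD GRing.addrK.
Qed.
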